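(* Impose (A1)–(A6), (A8) and the reverse mean dominance assumption (A9'), and fix $x\in\mathcal X$, $u\in[0,1]$. Write $R(x,u)=\frac{m_1^Y(x,u)}{m_1^S(x,u)}-\frac{m_0^Y(x,u)}{m_0^S(x,u)}$. Then $\Delta^{OO}_{Y^*}(x,u)\le R(x,u)$ in each case below, and moreover: (i) under (A7.1), $\Delta^{OO}_{Y^*}(x,u)\ge\underline y^*-\frac{m_0^Y(x,u)}{m_0^S(x,u)}$; (ii) under (A7.2), $\Delta^{OO}_{Y^*}(x,u)\ge\frac{m_1^Y(x,u)-\overline y^*\Delta_S(x,u)}{m_0^S(x,u)}-\frac{m_0^Y(x,u)}{m_0^S(x,u)}$; (iii) under (A7.3) (sub-case (a) or (b)), $\Delta^{OO}_{Y^*}(x,u)\ge\max\left\{\frac{m_1^Y(x,u)-\overline y^*\Delta_S(x,u)}{m_0^S(x,u)},\underline y^*\right\}-\frac{m_0^Y(x,u)}{m_0^S(x,u)}$; (iv) if $\mathcal Y^*=\mathbb R$, then $-\infty\le\Delta^{OO}_{Y^*}(x,u)\le R(x,u)$.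
   Context: Standing setup. On a common probability space: $X$ (covariates, support $\mathcal X$), $Z$ (instrument, support $\mathcal Z$), $W=(X,Z)$; latent real random variables $U,V$, jointly continuously distributed conditional on $X$, with $U\mid X$ and $V\mid X$ each Uniform$[0,1]$ (their joint dependence unrestricted); real potential outcomes of interest $Y_0^*,Y_1^*$. Given functions $P:\mathcal X\times\mathcal Z\to[0,1]$ and $Q:\{0,1\}\times\mathcal X\to[0,1]$, define the treatment $D=\mathbf 1\{P(W)\ge U\}$, potential selection indicators $S_d=\mathbf 1\{Q(d,X)\ge V\}$ ($d\in\{0,1\}$), selection indicator $S=DS_1+(1-D)S_0$, potential observable outcomes $Y_d=S_dY_d^*$ and observable outcome $Y=DY_1+(1-D)Y_0$. For $x\in\mathcal X$, $u\in[0,1]$, $d\in\{0,1\}$: $m_d^Y(x,u)=\mathbb E[Y_d\mid X=x,U=u]$, $m_d^S(x,u)=\mathbb E[S_d\mid X=x,U=u]$, $\Delta_S(x,u)=m_1^S(x,u)-m_0^S(x,u)$, and $\Delta^{OO}_{Y^*}(x,u)=\mathbb E[Y_1^*-Y_0^*\mid X=x,U=u,S_0=1,S_1=1]$. Ratios appearing are assumed well defined. Assumptions: (A1) $Z$ is independent of $(U,V,Y_0^*,Y_1^* )$ conditional on $X$; (A2) the distribution of $P(W)$ given $X$ is nondegenerate; (A3) $\mathbb E|Y_d^*|<\infty$ and $\mathbb E[(Y_d^* )^2]<\infty$; (A4) $0<\mathbb P[D=1\mid X]<1$; (A5) $X$ is invariant to counterfactual manipulation of treatment; (A6) $Y_0^*,Y_1^*$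 have a common support $\mathcal Y^*\subseteq\mathbb R$; $\underline y^*=\inf\mathcal Y^*$, $\overline y^*=\sup\mathcal Y^*$ (possibly infinite), known. Support cases: (A7.1) $\underline y^*>-\infty$, $\overline y^*=+\infty$, $\mathcal Y^*$ an interval; (A7.2) $\underline y^*=-\infty$, $\overline y^*<\infty$, $\mathcal Y^*$ an interval; (A7.3) both finite and either (a) $\mathcal Y^*$ an interval or (b) $\underline y^*,\overline y^*\in\mathcal Y^*$. (A8) $Q(1,x)>Q(0,x)>0$ for all $x\in\mathcal X$. (A9') (reverse mean dominance) for all $x,u$: $\mathbb E[Y_1^*\mid X=x,U=u,S_0=1,S_1=1]\le\mathbb E[Y_1^*\mid X=x,U=u,S_0=0,S_1=1]$. *)

(* Defs.v *)
From HB Require Import structures.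
From mathcomp Require Import all_boot all_order all_algebra.
From mathcomp Require Import all_classical all_reals all_analysis.
From mathcomp Require Import measurable_realfun.
Set Implicit Arguments. Unset Strict Implicit. Unset Printing Implicit Defensive.
Import Order.TTheory GRing.Theory Num.Theory.
Import numFieldNormedType.Exports.
Local Open Scope classical_set_scope.
Local Open Scope ring_scope.

(* The model. [Om] is the underlying probability space with law [Pr];  *)
(* [X : Om -> TX] covariates (TX plays the role of the covariate space *)
(* calX), [Z : Om -> TZ] instrument, [U V] latent, [Y0s Y1s] = Y_0^*,  *)
(* Y_1^*.  Pf = P(.,.), Q = Q(.,.).                                    *)

Definition ind (R : realType) (b : bool) : R := (b%:R)%R.

Definition Dtr (R : realType) d (Om : measurableType d) dx (TX : measurableType dx)
  dz (TZ : measurableType dz) (Pf : TX -> TZ -> R) (X : Om -> TX) (Z : Om -> TZ)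
  (U : Om -> R) : Om -> R :=
  fun w => ind R (U w <= Pf (X w) (Z w)).

Definition Sd (R : realType) d (Om : measurableType d) dx (TX : measurableType dx)
  (Q : bool -> TX -> R) (X : Om -> TX) (V : Om -> R) (b : bool) : Om -> R :=
  fun w => ind R (V w <= Q b (X w)).

Definition Sobs (R : realType) d (Om : measurableType d) dx (TX : measurableType dx)
  dz (TZ : measurableType dz) (Pf : TX -> TZ -> R) (Q : bool -> TX -> R)
  (X : Om -> TX) (Z : Om -> TZ) (U V : Om -> R) : Om -> R :=
  fun w => Dtr Pf X Z U w * Sd Q X V true w + (1 - Dtr Pf X Z U w) * Sd Q X V false w.

Definition Ypot (R : realType) d (Om : measurableType d) dx (TX : measurableType dx)
  (Q : bool -> TX -> R) (X : Om -> TX) (V : Om -> R) (Y0s Y1s : Om -> R)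
  (b : bool) : Om -> R :=
  fun w => Sd Q X V b w * (if b then Y1s w else Y0s w).

Definition Yobs (R : realType) d (Om : measurableType d) dx (TX : measurableType dx)
  dz (TZ : measurableType dz) (Pf : TX -> TZ -> R) (Q : bool -> TX -> R)
  (X : Om -> TX) (Z : Om -> TZ) (U V : Om -> R) (Y0s Y1s : Om -> R) : Om -> R :=
  fun w => Dtr Pf X Z U w * Ypot Q X V Y0s Y1s true w
           + (1 - Dtr Pf X Z U w) * Ypot Q X V Y0s Y1s false w.

Definition Ex (R : realType) d (Om : measurableType d) (mu : {measure set Om -> \bar R})
  (f : Om -> R) : R := fine (\int[mu]_w (f w)%:E).
Definition Pb (R : realType) d (Om : measurableType d) (mu : {measure set Om -> \bar R})
  (A : set Om) : R := fine (mu A).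
Definition Exc (R : realType) d (Om : measurableType d) (mu : {measure set Om -> \bar R})
  (f : Om -> R) (A : set Om) : R := Ex mu (fun w => f w * \1_A w) / Pb mu A.

Definition is_cond_law_X (R : realType) d (Om : measurableType d)
  (Pr : probability Om R) dx (TX : measurableType dx) (X : Om -> TX)
  (kX : R.-pker TX ~> Om) : Prop :=
  forall (A : set Om) (B : set TX), measurable A -> measurable B ->
    Pr (A `&` X @^-1` B) = (\int[Pr]_(w in X @^-1` B) kX (X w) A)%E.

Definition is_cond_law_XU (R : realType) d (Om : measurableType d)
  (Pr : probability Om R) dx (TX : measurableType dx) (X : Om -> TX) (U : Om -> R)
  (kXU : R.-pker (TX * R) ~> Om) : Prop :=
  forall (A : set Om) (B : set TX) (C : set R), measurable A -> measurable B ->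
    measurable C ->
    Pr (A `&` X @^-1` B `&` U @^-1` C) =
      (\int[Pr]_(w in X @^-1` B `&` U @^-1` C) kXU (X w, U w) A)%E.

Definition unif01_under (R : realType) d (Om : measurableType d)
  (mu : {measure set Om -> \bar R}) (W : Om -> R) : Prop :=
  forall B : set R, measurable B ->
    mu (W @^-1` B) = (@lebesgue_measure R) (B `&` `[0%R, 1%R]).

Definition jointly_continuous_under (R : realType) d (Om : measurableType d)
  (mu : {measure set Om -> \bar R}) (U V : Om -> R) : Prop :=
  forall N : set (R * R), measurable N ->
    ((@lebesgue_measure R) \x (@lebesgue_measure R))%E N = 0%E ->
    mu ((fun w => (U w, V w)) @^-1` N) = 0%E.

Definition indep_under (R : realType) d (Om : measurableType d)
  (mu : {measure set Om -> \bar R}) dz (TZ : measurableType dz) (Z : Om -> TZ)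
  (U V Y0s Y1s : Om -> R) : Prop :=
  forall (A : set TZ) (B1 B2 B3 B4 : set R), measurable A -> measurable B1 ->
    measurable B2 -> measurable B3 -> measurable B4 ->
    let E := U @^-1` B1 `&` V @^-1` B2 `&` Y0s @^-1` B3 `&` Y1s @^-1` B4 in
    mu (Z @^-1` A `&` E) = (mu (Z @^-1` A) * mu E)%E.

Definition mY (R : realType) d (Om : measurableType d) dx (TX : measurableType dx)
  (kXU : R.-pker (TX * R) ~> Om) (Q : bool -> TX -> R) (X : Om -> TX)
  (V Y0s Y1s : Om -> R) (b : bool) (x : TX) (u : R) : R :=
  Ex (kXU (x, u)) (Ypot Q X V Y0s Y1s b).

Definition mS (R : realType) d (Om : measurableType d) dx (TX : measurableType dx)
  (kXU : R.-pker (TX * R) ~> Om) (Q : bool -> TX -> R) (X : Om -> TX)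
  (V : Om -> R) (b : bool) (x : TX) (u : R) : R :=
  Ex (kXU (x, u)) (Sd Q X V b).

Definition DeltaS (R : realType) d (Om : measurableType d) dx (TX : measurableType dx)
  (kXU : R.-pker (TX * R) ~> Om) (Q : bool -> TX -> R) (X : Om -> TX)
  (V : Om -> R) (x : TX) (u : R) : R :=
  mS kXU Q X V true x u - mS kXU Q X V false x u.

Definition Sev (R : realType) d (Om : measurableType d) dx (TX : measurableType dx)
  (Q : bool -> TX -> R) (X : Om -> TX) (V : Om -> R) (s0 s1 : R) : set Om :=
  [set w | Sd Q X V false w = s0 /\ Sd Q X V true w = s1].

Definition DeltaOO (R : realType) d (Om : measurableType d) dx (TX : measurableType dx)
  (kXU : R.-pker (TX * R) ~> Om) (Q : bool -> TX -> R) (X : Om -> TX)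
  (V Y0s Y1s : Om -> R) (x : TX) (u : R) : R :=
  Exc (kXU (x, u)) (fun w => Y1s w - Y0s w) (Sev Q X V 1 1).

Definition Rbound (R : realType) d (Om : measurableType d) dx (TX : measurableType dx)
  (kXU : R.-pker (TX * R) ~> Om) (Q : bool -> TX -> R) (X : Om -> TX)
  (V Y0s Y1s : Om -> R) (x : TX) (u : R) : R :=
  mY kXU Q X V Y0s Y1s true x u / mS kXU Q X V true x u
  - mY kXU Q X V Y0s Y1s false x u / mS kXU Q X V false x u.

Definition reverse_mean_dominance (R : realType) d (Om : measurableType d)
  dx (TX : measurableType dx) (kXU : R.-pker (TX * R) ~> Om)
  (Q : bool -> TX -> R) (X : Om -> TX) (V Y1s : Om -> R) : Prop :=
  forall (x : TX) (u : R), (0 <= u <= 1)%R ->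
    (kXU (x, u)).-integrable setT (EFin \o Y1s) ->
    (0 < Pb (kXU (x, u)) (Sev Q X V 1 1))%R ->
    (0 < Pb (kXU (x, u)) (Sev Q X V 0 1))%R ->
    (Exc (kXU (x, u)) Y1s (Sev Q X V 1 1) <= Exc (kXU (x, u)) Y1s (Sev Q X V 0 1))%R.

Definition ylow (R : realType) (Ys : set R) : \bar R := ereal_inf (EFin @` Ys).
Definition yup (R : realType) (Ys : set R) : \bar R := ereal_sup (EFin @` Ys).

(* Main.v *)
Require Import Defs.
From HB Require Import structures.
From mathcomp Require Import all_boot all_order all_algebra.
From mathcomp Require Import all_classical all_reals all_analysis.
From mathcomp Require Import measurable_realfun.
Import Order.TTheory GRing.Theory Num.Theory.
Import numFieldNormedType.Exports.
Local Open Scope classical_set_scope.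
Local Open Scope ring_scope.

Section gen.
Context {R : realType} {d} {Om : measurableType d} {mu : {measure set Om -> \bar R}}.
Hypothesis hmu : mu setT = 1%E.

Lemma int_indic (A : set Om) : measurable A -> mu.-integrable setT (fun w => (\1_A w)%:E).
Proof.
move=> mA; apply/integrableP; split; first exact/measurable_EFinP/measurable_indic.
rewrite (eq_integral (fun x => (\1_A x)%:E)); last first.
  by move=> t _; rewrite gee0_abs// lee_fin.
rewrite integral_indic// setIT.
by rewrite (@le_lt_trans _ _ (mu setT)) ?le_measure ?inE// hmu ltry.
Qed.

Lemma int_mulind (f : Om -> R) (A : set Om) : measurable A ->
  mu.-integrable setT (EFin \o f) ->
  mu.-integrable setT (EFin \o (fun w => f w * \1_A w)).
Proof.
move=> mA intf; apply: (le_integrable measurableT _ _ intf).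
  apply/measurable_EFinP; apply: measurable_funM; last exact: measurable_indic.
  by apply/measurable_EFinP; exact: (measurable_int _ intf).
move=> w _ /=; rewrite lee_fin normrM.
rewrite indicE; case: (w \in A) => /=; first by rewrite normr1 mulr1.
by rewrite normr0 mulr0.
Qed.

Lemma ExD (f g : Om -> R) : mu.-integrable setT (EFin \o f) ->
  mu.-integrable setT (EFin \o g) -> Ex mu (fun w => f w + g w) = Ex mu f + Ex mu g.
Proof.
move=> intf intg; rewrite /Ex.
under eq_integral do rewrite EFinD.
rewrite integralD//; rewrite fineD//; exact: integrable_fin_num.
Qed.

Lemma ExZ (c : R) (f : Om -> R) : mu.-integrable setT (EFin \o f) ->
  Ex mu (fun w => c * f w) = c * Ex mu f.
Proof.
move=> intf; rewrite /Ex.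
under eq_integral do rewrite EFinM.
rewrite integralZl// fineM//; exact: integrable_fin_num.
Qed.

Lemma Ex_le (f g : Om -> R) : mu.-integrable setT (EFin \o f) ->
  mu.-integrable setT (EFin \o g) -> (forall w, f w <= g w) -> Ex mu f <= Ex mu g.
Proof.
move=> intf intg fg; rewrite /Ex; apply: fine_le.
- exact: integrable_fin_num.
- exact: integrable_fin_num.
apply: le_integral => // w _; rewrite lee_fin; exact: fg.
Qed.

Lemma Ex_indic (A : set Om) : measurable A -> Ex mu (\1_A) = Pb mu A.
Proof. by move=> mA; rewrite /Ex /Pb integral_indic// setIT. Qed.

Lemma Pb_ge0 (A : set Om) : 0 <= Pb mu A.
Proof. exact: fine_ge0. Qed.

Lemma Pb_fin (A : set Om) : measurable A -> (mu A = (Pb mu A)%:E).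
Proof.
move=> mA; rewrite /Pb fineK// ge0_fin_numE//.
have : (mu A <= mu setT)%E by apply: le_measure; rewrite ?inE.
by rewrite hmu => /le_lt_trans; apply; rewrite ltry.
Qed.

Lemma Ex_null (f : Om -> R) (A : set Om) : measurable A -> Pb mu A = 0 ->
  mu.-integrable setT (EFin \o f) -> Ex mu (fun w => f w * \1_A w) = 0.
Proof.
move=> mA PA intf; rewrite /Ex.
have -> : (fun w => (f w * \1_A w)%:E) = ((EFin \o f) \_ A).
  apply/funext => w; rewrite /patch indicE; case: (w \in A) => /=.
    by rewrite mulr1. by rewrite mulr0.
rewrite -integral_mkcond null_set_integral//.
  apply: measurable_funS (measurable_int _ intf) => //.
by rewrite Pb_fin// PA.
Qed.
Lemma int_Z (c : R) (f : Om -> R) : mu.-integrable setT (EFin \o f) ->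
  mu.-integrable setT (EFin \o (fun w => c * f w)).
Proof.
move=> intf; apply: (eq_integrable measurableT _ _ _ (integrableZl measurableT c intf)).
by move=> w _ /=; rewrite EFinM.
Qed.
End gen.
Theorem corollaryF1
  (R : realType) (d : measure_display) (Om : measurableType d)
  (Pr : probability Om R)
  (dx : measure_display) (TX : measurableType dx)
  (dz : measure_display) (TZ : measurableType dz)
  (X : Om -> TX) (Z : Om -> TZ) (U V Y0s Y1s : Om -> R)
  (Pf : TX -> TZ -> R) (Q : bool -> TX -> R)
  (kX : R.-pker TX ~> Om) (kXU : R.-pker (TX * R) ~> Om)
  (Ys : set R)
  (* measurability of the primitives *)
  (mX : measurable_fun setT X) (mZ : measurable_fun setT Z)
  (mU : measurable_fun setT U) (mV : measurable_fun setT V)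
  (mY0 : measurable_fun setT Y0s) (mY1 : measurable_fun setT Y1s)
  (mPW : measurable_fun setT (fun w => Pf (X w) (Z w)))
  (mQ : forall b, measurable_fun setT (Q b))
  (* regular conditional laws given X and given (X,U) *)
  (hkX : is_cond_law_X Pr X kX) (hkXU : is_cond_law_XU Pr X U kXU)
  (* U | X and V | X are Uniform[0,1], (U,V) | X jointly continuous *)
  (hU : forall x, unif01_under (kX x) U)
  (hV : forall x, unif01_under (kX x) V)
  (hUV : forall x, jointly_continuous_under (kX x) U V)
  (* (A1) *)
  (A1 : forall x, indep_under (kX x) Z U V Y0s Y1s)
  (* (A2) *)
  (A2 : forall x, ~ exists c : R, kX x [set w | Pf (X w) (Z w) = c] = 1%E)
  (* (A3) *)
  (A3 : forall b : bool, Pr.-integrable setT (EFin \o (if b then Y1s else Y0s)) /\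
        Pr.-integrable setT (EFin \o (fun w => (if b then Y1s w else Y0s w) ^+ 2)))
  (* (A4) *)
  (A4 : forall x, (0 < kX x [set w | Dtr Pf X Z U w = 1%R])%E /\
                  (kX x [set w | Dtr Pf X Z U w = 1%R] < 1)%E)
  (* (A6): Y0*, Y1* have the common support Ys *)
  (A6 : range Y0s = Ys /\ range Y1s = Ys)
  (* (A8) *)
  (A8 : forall x, 0 < Q false x < Q true x)
  (* (A9') *)
  (A9 : reverse_mean_dominance kXU Q X V Y1s)
  (* the fixed point, and well-definedness of the quantities at it *)
  (x : TX) (u : R) (hu : 0 <= u <= 1)
  (int0 : (kXU (x, u)).-integrable setT (EFin \o Y0s))
  (int1 : (kXU (x, u)).-integrable setT (EFin \o Y1s))
  (pos0 : 0 < mS kXU Q X V false x u) :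
  let m1Y := mY kXU Q X V Y0s Y1s true x u in
  let m0Y := mY kXU Q X V Y0s Y1s false x u in
  let m0S := mS kXU Q X V false x u in
  let dS := DeltaS kXU Q X V x u in
  let D := DeltaOO kXU Q X V Y0s Y1s x u in
  let Rxu := Rbound kXU Q X V Y0s Y1s x u in
  (* (i) under (A7.1) *)
  ((-oo < ylow Ys)%E -> yup Ys = +oo%E -> is_interval Ys ->
     D <= Rxu /\ (ylow Ys - (m0Y / m0S)%:E <= D%:E)%E) /\
  (* (ii) under (A7.2) *)
  (ylow Ys = -oo%E -> (yup Ys < +oo)%E -> is_interval Ys ->
     D <= Rxu /\ (m1Y - fine (yup Ys) * dS) / m0S - m0Y / m0S <= D) /\
  (* (iii) under (A7.3) (a) or (b) *)
  ((-oo < ylow Ys)%E -> (yup Ys < +oo)%E ->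
     (is_interval Ys \/ (Ys (fine (ylow Ys)) /\ Ys (fine (yup Ys)))) ->
     D <= Rxu /\
     Num.max ((m1Y - fine (yup Ys) * dS) / m0S) (fine (ylow Ys)) - m0Y / m0S <= D) /\
  (* (iv) Ys = R *)
  (Ys = setT -> (-oo <= D%:E)%E /\ D <= Rxu).
Proof.
cbv zeta.
set mu := kXU (x, u).
have hmu : mu setT = 1%E by exact: prob_kernel.
pose S (b : bool) := [set w | V w <= Q b (X w)].
have mSb b : measurable (S b).
  have := measurable_fun_ler mV (measurableT_comp (mQ b) mX) measurableT
    (Y := [set true]) I.
  by rewrite setTI.
have memS b w : (w \in S b) = (V w <= Q b (X w)) by apply/idP/idP; rewrite in_setE.
have sub01 w : V w <= Q false (X w) -> V w <= Q true (X w).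
  by move=> h; apply: (le_trans h); have /andP[_ /ltW] := A8 (X w).
pose A01 := S true `&` ~` S false.
have mA01 : measurable A01 by apply: measurableI => //; exact: measurableC.
have memA w : (w \in A01) = (V w <= Q true (X w)) && ~~ (V w <= Q false (X w)).
  by rewrite in_setI in_setC !memS.
have ind1 (b : bool) : ind R b = 1 <-> b.
  by case: b; split => //= /eqP; rewrite /ind /= eq_sym oner_eq0.
have Sev11 : Sev Q X V 1 1 = S false.
  apply/seteqP; split => w /=; rewrite /Sd.
    by case=> /ind1.
  move=> h; split; apply/ind1 => //; exact: sub01.
have Sev01 : Sev Q X V 0 1 = A01.
  apply/seteqP; split => w /=; rewrite /Sd.
    case=> h0 /ind1 h1; split => //= h; move: h0.
    by rewrite /Sd/= /ind h /= => /eqP; rewrite oner_eq0.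
  case=> /= h1 h0; split; last exact/ind1.
  by move: h0; rewrite /S /Sd /ind /=; case: (V w <= Q false (X w)).
have ind_S b w : \1_(S b) w = Sd Q X V b w by rewrite indicE memS.
have ind_1 w : Sd Q X V true w = \1_(S false) w + \1_A01 w.
  rewrite !indicE memS memA /Sd /ind; have := sub01 w.
  case: (V w <= Q false (X w)); case: (V w <= Q true (X w)) => /= h.
  all: rewrite ?mulr0n ?mulr1n ?addr0 ?add0r //.
  by have := h isT.
pose p11 := Pb mu (S false); pose p01 := Pb mu A01.
pose I1 := Ex mu (fun w => Y1s w * \1_(S false) w).
pose J1 := Ex mu (fun w => Y1s w * \1_A01 w).
pose K0 := Ex mu (fun w => Y0s w * \1_(S false) w).
have iS0 := int_indic hmu _ (mSb false).
have iA := int_indic hmu _ mA01.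
have iY1 := int_mulind _ _ (mSb false) int1.
have iY1A := int_mulind _ _ mA01 int1.
have iY0 := int_mulind _ _ (mSb false) int0.
have hm0S : mS kXU Q X V false x u = p11.
  rewrite /mS -/mu /p11 -Ex_indic //; congr Ex; apply/funext => w; by rewrite ind_S.
have hm1S : mS kXU Q X V true x u = p11 + p01.
  rewrite /mS -/mu; transitivity (Ex mu (fun w => \1_(S false) w + \1_A01 w)).
    by congr Ex; apply/funext => w; rewrite ind_1.
  by rewrite ExD ?Ex_indic.
have hm1Y : mY kXU Q X V Y0s Y1s true x u = I1 + J1.
  rewrite /mY -/mu; transitivity (Ex mu (fun w => Y1s w * \1_(S false) w + Y1s w * \1_A01 w)).
    by congr Ex; apply/funext => w; rewrite /Ypot ind_1 mulrC mulrDr.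
  by rewrite ExD //; apply: int_mulind.
have hm0Y : mY kXU Q X V Y0s Y1s false x u = K0.
  by rewrite /mY -/mu; congr Ex; apply/funext => w; rewrite /Ypot /= -ind_S mulrC.
have hD : DeltaOO kXU Q X V Y0s Y1s x u = (I1 - K0) / p11.
  rewrite /DeltaOO /Exc Sev11 -/mu; congr (_ / _).
  transitivity (Ex mu (fun w => Y1s w * \1_(S false) w + (-1) * (Y0s w * \1_(S false) w))).
    by congr Ex; apply/funext => w; rewrite mulrBl mulN1r.
  by rewrite ExD ?ExZ ?mulN1r //; apply: int_Z.
have p11pos : 0 < p11 by rewrite -hm0S.
have p01ge0 : 0 <= p01 := Pb_ge0 _.
have hRxu : Rbound kXU Q X V Y0s Y1s x u = (I1 + J1) / (p11 + p01) - K0 / p11.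
  by rewrite /Rbound hm1Y hm1S hm0Y hm0S.
have hdS : DeltaS kXU Q X V x u = p01.
  by rewrite /DeltaS hm1S hm0S addrC addKr.
have UB : (I1 - K0) / p11 <= (I1 + J1) / (p11 + p01) - K0 / p11.
  rewrite mulrBl lerD2r.
  have [p0|p0] := eqVneq p01 0.
    have J0 : J1 = 0 by exact: (Ex_null hmu Y1s A01 mA01 p0 int1).
    by rewrite J0 p0 !addr0.
  have p0' : 0 < p01 by rewrite lt_neqAle eq_sym p0 p01ge0.
  have h := A9 x u hu int1; rewrite -/mu Sev11 Sev01 in h.
  have {h} /= h := h p11pos p0'.
  rewrite ler_pdivlMr // in h.
  rewrite ler_pdivlMr ?addr_gt0 // mulrDr divfK ?gt_eqF //.
  by rewrite lerD2l.
have [w0 _] : exists w : Om, True.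
  case: (pselect (exists w : Om, True)) => // hne; exfalso.
  have h0 : S false = set0.
    by apply/seteqP; split => w // _; apply: hne; exists w.
  by move: p11pos; rewrite /p11 h0 /Pb measure0 /= ltxx.
have lowle w : (ylow Ys <= (Y1s w)%:E)%E.
  by apply: ereal_inf_lbound; exists (Y1s w) => //; rewrite -A6.2; exists w.
have upge w : ((Y1s w)%:E <= yup Ys)%E.
  by apply: ereal_sup_ubound; exists (Y1s w) => //; rewrite -A6.2; exists w.
have LBlow : (-oo < ylow Ys)%E ->
    ylow Ys = (fine (ylow Ys))%:E /\ fine (ylow Ys) - K0 / p11 <= (I1 - K0) / p11.
  move=> hl.
  have fl : ylow Ys \is a fin_num.
    by apply/fin_numPlt; rewrite hl (le_lt_trans (lowle w0)) ?ltry.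
  split; first by rewrite fineK.
  set c := fine (ylow Ys).
  have cle w : c <= Y1s w by rewrite -lee_fin /c fineK.
  have : Ex mu (fun w => c * \1_(S false) w) <= I1.
    apply: Ex_le => //; first exact: (int_Z c _ iS0).
    by move=> w; apply: ler_wpM2r; [rewrite indicE ler0n | exact: cle].
  rewrite ExZ; last exact: iS0.
  rewrite Ex_indic // => h.
  by rewrite mulrBl lerD2r ler_pdivlMr.
have LBup : (yup Ys < +oo)%E ->
    (I1 + J1 - fine (yup Ys) * p01) / p11 - K0 / p11 <= (I1 - K0) / p11.
  move=> hu'.
  have fu : yup Ys \is a fin_num.
    by apply/fin_numPlt; rewrite hu' (lt_le_trans _ (upge w0)) ?ltNyr.
  set e := fine (yup Ys).
  have ele w : Y1s w <= e by rewrite -lee_fin /e fineK.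
  have : J1 <= Ex mu (fun w => e * \1_A01 w).
    apply: Ex_le => //; first exact: (int_Z e _ iA).
    by move=> w; apply: ler_wpM2r; [rewrite indicE ler0n | exact: ele].
  rewrite ExZ; last exact: iA.
  rewrite Ex_indic // => h.
  rewrite -!mulrBl; apply: ler_wpM2r; first by rewrite invr_ge0 ltW.
  by rewrite lerD2r -addrA gerDl subr_le0.
rewrite hD hRxu hm1Y hm0Y hm0S hdS.
split; [move=> hl _ _ | split; [move=> _ hu' _ | split; [move=> hl hu' _ | move=> _]]].
- have [el h] := LBlow hl; split; first exact: UB.
  by rewrite el -EFinB lee_fin.
- by split; [exact: UB | exact: LBup].
- split; first exact: UB.
  rewrite /Num.max; case: ifP => _; [exact: (LBlow hl).2 | exact: LBup].
- by split; [exact: leNye | exact: UB].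
Qed.
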